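(* Assume (A1) and (A2) below. Then for any $s\in\mathcal S$ and policy $\pi$, $$\Big(\mathbb{E}_{p_s\sim\Phi_{s,t}}\Big[\mathbb{E}_{p\sim\Phi_t}\Big[\sum_{a,s'}p(a,s'\mid s)V^{\pi,p}(s')\;\Big|\;\mathbf P_s\Big]\Big]\Big)^2=\sum_{a,s'}\bar p_t(a,s'\mid s)\big(\bar V^\pi_t(s')\big)^2-\mathbb{V}_{a,s'\sim\pi,\bar p_t}\big[\bar V^\pi_t(s')\big].$$
   Context: Let $\mathcal S$ be a finite state space, $\mathcal A$ a finite action space, $r:\mathcal S\times\mathcal A\to\mathbb R$ a known bounded (deterministic) reward function and $\gamma\in[0,1)$ a discount factor. A transition function $p$ assigns to each $(s,a)$ a probability distribution $p(\cdot\mid s,a)$ on $\mathcal S$. A policy $\pi$ gives distributions $\pi(\cdot\mid s)$ on $\mathcal A$; write $p(a,s'\mid s)=\pi(a\mid s)p(s'\mid s,a)$. For a transition function $p$, the value function is $V^{\pi,p}(s)=\mathbb E\big[\sum_{h\ge 0}\gamma^h r(s_h,a_h)\mid s_0=s\big]$ with $a_h\sim\pi(\cdot\mid s_h)$, $s_{h+1}\sim p(\cdot\mid s_h,a_h)$. The transition function $p$ is a random variable with distribution $\Phi_t$; $\bar p_t(s'\mid s,a)=\mathbb E_{p\sim\Phi_t}[p(s'\mid s,a)]$, $\bar p_t(a,s'\mid s)=\pi(a\mid s)\bar p_t(s'\mid s,a)$, $\bar V^\pi_t(s)=\mathbb E_{p\sim\Phi_t}[V^{\pi,p}(s)]$.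 For a transition function $q$ and a function $f$ on $\mathcal S$, $\mathbb V_{a,s'\sim\pi,q}[f(s')]$ denotes the variance of $f(s')$ when $a\sim\pi(\cdot\mid s)$ and $s'\sim q(\cdot\mid s,a)$. For fixed $s$, $p_s$ denotes the map $a\mapsto p(\cdot\mid s,a)$, $\mathbf P_s=\{p_s(s'\mid a)\}_{s'\in\mathcal S,a\in\mathcal A}$, and $\Phi_{s,t}$ is the marginal of $\Phi_t$ on the transitions starting from $s$. Assumptions: (A1) (independent transitions) $p(s'\mid x,a)$ and $p(s'\mid y,a)$ are independent random variables if $x\neq y$; (A2) (acyclic MDP) the MDP is a directed acyclic graph, i.e., states are not visited more than once in any given episode. *)

(* Defs.v *)
From HB Require Import structures.
From mathcomp Require Import all_boot all_order all_algebra.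
From mathcomp Require Import all_classical all_reals all_analysis.
Set Implicit Arguments. Unset Strict Implicit. Unset Printing Implicit Defensive.
Import Order.TTheory GRing.Theory Num.Theory.
Import numFieldNormedType.Exports.
Local Open Scope classical_set_scope.
Local Open Scope ring_scope.

Definition is_policy (R : realType) (S A : finType) (pi : S -> A -> R) : Prop :=
  (forall x a, 0 <= pi x a) /\ (forall x, \sum_(a : A) pi x a = 1).

Definition is_transition (R : realType) (S A : finType) (q : S -> A -> S -> R) : Prop :=
  (forall x a y, 0 <= q x a y) /\ (forall x a, \sum_(y : S) q x a y = 1).

Definition rew_pi (R : realType) (S A : finType) (pi : S -> A -> R) (r : S -> A -> R)
  (x : S) : R := \sum_(a : A) pi x a * r x a.

Definition step_pi (R : realType) (S A : finType) (pi : S -> A -> R)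
  (q : S -> A -> S -> R) (f : S -> R) : S -> R :=
  fun x => \sum_(a : A) pi x a * \sum_(y : S) q x a y * f y.

(* V^{pi,q}(s) = E[ sum_h gamma^h r(s_h,a_h) | s_0 = s ]
   = sum_{h>=0} gamma^h E[r(s_h,a_h)], written as the limit of partial sums. *)
Definition value (R : realType) (S A : finType) (pi : S -> A -> R) (r : S -> A -> R)
  (gamma : R) (q : S -> A -> S -> R) (s : S) : R :=
  limn (fun n => \sum_(h < n) gamma ^+ h * iter h (step_pi pi q) (rew_pi pi r) s).

(* sigma-algebra generated by P_x = {p(y|x,a)}_{y,a}, the transitions from x *)
Definition sigma_trans (R : realType) (S A : finType) (d : measure_display)
  (T : measurableType d) (p : T -> S -> A -> S -> R) (x : S) : set (set T) :=
  <<s [set E | exists (a : A) (y : S) (B : set R),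
          measurable B /\ E = (fun w => p w x a y) @^-1` B] >>.

(* (A1) the transitions from different states are (mutually) independent:
   the sigma-algebras sigma(P_x), x in S, are mutually independent. *)
Definition indep_transitions (R : realType) (S A : finType) (d : measure_display)
  (T : measurableType d) (P : probability T R) (p : T -> S -> A -> S -> R) : Prop :=
  forall E : S -> set T, (forall x, sigma_trans p x (E x)) ->
    P (\bigcap_(x in [set: S]) E x) = (\prod_(x : S) P (E x))%E.

Definition mdp_edge (R : realType) (S A : finType) (T : Type)
  (p : T -> S -> A -> S -> R) : rel S :=
  fun x y => `[< x != y /\ exists (w : T) (a : A), 0 < p w x a y >].

(* (A2) acyclic MDP: the transition graph has no directed cycle; the only
   allowed self-transitions are those of terminal (absorbing) states, where the
   episode ends: such a state loops to itself with probability one. *)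
Definition acyclic_mdp (R : realType) (S A : finType) (T : Type)
  (p : T -> S -> A -> S -> R) : Prop :=
  (forall x y, mdp_edge p x y -> ~~ connect (mdp_edge p) y x) /\
  (forall w x a, 0 < p w x a x -> forall w' a', p w' x a' x = 1).

Definition is_cond_exp (R : realType) (d : measure_display) (T : measurableType d)
  (P : probability T R) (F : set (set T)) (Y Z : T -> R) : Prop :=
  (forall B : set R, measurable B -> F (Z @^-1` B)) /\
  P.-integrable setT (EFin \o Z) /\
  (forall E, F E -> (\int[P]_(w in E) (Z w)%:E = \int[P]_(w in E) (Y w)%:E)%E).

Definition pbar (R : realType) (S A : finType) (d : measure_display)
  (T : measurableType d) (P : probability T R) (p : T -> S -> A -> S -> R)
  (x : S) (a : A) (y : S) : R := fine ('E_P[fun w => p w x a y])%E.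

Definition Vbar (R : realType) (S A : finType) (d : measure_display)
  (T : measurableType d) (P : probability T R) (p : T -> S -> A -> S -> R)
  (pi : S -> A -> R) (r : S -> A -> R) (gamma : R) (y : S) : R :=
  fine ('E_P[fun w => value pi r gamma (p w) y])%E.

Definition var_pi (R : realType) (S A : finType) (pi : S -> A -> R)
  (q : S -> A -> S -> R) (s : S) (f : S -> R) : R :=
  let m := \sum_(a : A) \sum_(y : S) pi s a * q s a y * f y in
  \sum_(a : A) \sum_(y : S) pi s a * q s a y * (f y - m) ^+ 2.

(* Main.v *)
Set Warnings "-all".
Require Import Defs.
From HB Require Import structures.
From mathcomp Require Import all_boot all_order all_algebra.
From mathcomp Require Import all_classical all_reals all_analysis.
From mathcomp Require Import ring lra.
Import Order.TTheory GRing.Theory Num.Theory.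
Import numFieldNormedType.Exports.
Local Open Scope classical_set_scope.
Local Open Scope ring_scope.
Section toolbox.
Context {d : measure_display} {T : measurableType d} {R : realType} (P : probability T R).

Definition bmeas (f : T -> R) := measurable_fun setT f /\ exists M, forall w, `|f w| <= M.

Lemma bmeas_int f : bmeas f -> P.-integrable setT (EFin \o f).
Proof.
move=> [mf [M HM]]; apply: measurable_bounded_integrable => //.
  by apply: (le_lt_trans (probability_le1 P measurableT)); rewrite ltry.
exists M; split; first exact: num_real.
by move=> M' HM' x _; apply: le_trans (HM x) (ltW HM').
Qed.

Lemma PT1 : fine (P setT) = 1.
Proof. by rewrite probability_setT. Qed.

Definition EE f := Rintegral P setT f.

Lemma bmeasD f g : bmeas f -> bmeas g -> bmeas (fun w => f w + g w).
Proof.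
move=> [mf [M HM]] [mg [N HN]]; split; first exact: measurable_realfun.measurable_funD.
exists (M + N) => w; apply: le_trans (ler_normD _ _) _; exact: lerD.
Qed.

Lemma bmeasM f g : bmeas f -> bmeas g -> bmeas (fun w => f w * g w).
Proof.
move=> [mf [M HM]] [mg [N HN]]; split; first exact: measurable_realfun.measurable_funM.
exists (M * N) => w; rewrite normrM; apply: ler_pM => //.
Qed.

Lemma bmeasB f g : bmeas f -> bmeas g -> bmeas (fun w => f w - g w).
Proof.
move=> [mf [M HM]] [mg [N HN]]; split; first exact: measurable_realfun.measurable_funB.
exists (M + N) => w; apply: le_trans (ler_normB _ _) _; exact: lerD.
Qed.

Lemma bmeas_cst c : bmeas (fun=> c).
Proof. split; [exact: measurable_cst | by exists `|c|]. Qed.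

Lemma bmeas_indic A : measurable A -> bmeas (\1_A).
Proof.
move=> mA; split; first exact: measurable_realfun.measurable_indic.
exists 1 => w; rewrite /indic; case: (w \in A); by rewrite ?normr1 ?normr0.
Qed.

Lemma bmeas_abs f : bmeas f -> bmeas (fun w => `|f w|).
Proof.
move=> [mf [M HM]]; split.
  exact: measurableT_comp (@measurable_realfun.normr_measurable _ _) mf.
by exists M => w; rewrite normr_id.
Qed.

Lemma bmeas_sum I (s : seq I) (f : I -> T -> R) :
  (forall i, bmeas (f i)) -> bmeas (fun w => \sum_(i <- s) f i w).
Proof.
move=> H; elim: s => [|i s IH].
  by under eq_fun do rewrite big_nil; exact: bmeas_cst.
under eq_fun do rewrite big_cons; exact: bmeasD.
Qed.

Lemma EED f g : bmeas f -> bmeas g -> EE (fun w => f w + g w) = EE f + EE g.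
Proof. by move=> bf bg; rewrite /EE RintegralD //; exact: bmeas_int. Qed.

Lemma EEB f g : bmeas f -> bmeas g -> EE (fun w => f w - g w) = EE f - EE g.
Proof. by move=> bf bg; rewrite /EE RintegralB //; exact: bmeas_int. Qed.

Lemma EEZ c f : bmeas f -> EE (fun w => c * f w) = c * EE f.
Proof. by move=> bf; rewrite /EE RintegralZl //; exact: bmeas_int. Qed.

Lemma EE_sum I (s : seq I) (f : I -> T -> R) :
  (forall i, bmeas (f i)) -> EE (fun w => \sum_(i <- s) f i w) = \sum_(i <- s) EE (f i).
Proof.
move=> H; elim: s => [|i s IH].
  rewrite big_nil; under eq_fun do rewrite big_nil.
  by rewrite /EE Rintegral_cst // mul0r.
rewrite big_cons -IH; under eq_fun do rewrite big_cons.
by rewrite EED //; exact: bmeas_sum.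
Qed.

Lemma EE_cst c : EE (fun=> c) = c.
Proof. by rewrite /EE Rintegral_cst // PT1 mulr1. Qed.

Lemma EE_indic A : measurable A -> EE (\1_A) = fine (P A).
Proof. by move=> mA; rewrite /EE /Rintegral integral_indic // setIT. Qed.

Lemma EE_bound f c : bmeas f -> (forall w, `|f w| <= c) -> `|EE f| <= c.
Proof.
move=> bf Hc; rewrite /EE; apply: le_trans (le_normr_Rintegral _ _) _ => //.
  exact: bmeas_int.
apply: le_trans (_ : Rintegral P setT (fun=> c) <= c).
  apply: le_Rintegral => //.
  - by apply: bmeas_int; exact: bmeas_abs.
  - by apply: bmeas_int; exact: bmeas_cst.
by rewrite Rintegral_cst // PT1 mulr1.
Qed.

End toolbox.
Section indep.
Context {d : measure_display} {T : measurableType d} {R : realType} (P : probability T R).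

Definition Fmeas (F : set (set T)) (f : T -> R) :=
  forall B : set R, measurable B -> F (f @^-1` B).

Definition sfun (F : set (set T)) (h : T -> R) :=
  exists K (c : 'I_K -> R) (A : 'I_K -> set T),
    (forall i, F (A i)) /\ forall w, h w = \sum_(i < K) c i * \1_(A i) w.

Lemma Fmeas_meas F f : (forall A, F A -> measurable A) -> Fmeas F f ->
  measurable_fun setT f.
Proof. by move=> HF Hf _ B mB; rewrite setTI; apply: HF; apply: Hf. Qed.

Lemma P_fin A : measurable A -> P A \is a fin_num.
Proof.
move=> mA; rewrite ge0_fin_numE //.
by apply: le_lt_trans (probability_le1 P mA) _; rewrite ltry.
Qed.

Lemma sfun_bmeas F h : (forall A, F A -> measurable A) -> sfun F h -> bmeas h.
Proof.
move=> HF [K [c [A [HA Hh]]]].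
rewrite (_ : h = fun w => \sum_(i < K) c i * \1_(A i) w); last exact: funext.
apply: bmeas_sum => i; apply: bmeasM; first exact: bmeas_cst.
by apply: bmeas_indic; apply: HF.
Qed.

Lemma EE_sfun (F : set (set T)) : (forall A, F A -> measurable A) ->
  forall K (c : 'I_K -> R) (A : 'I_K -> set T), (forall i, F (A i)) ->
  EE P (fun w => \sum_(i < K) c i * \1_(A i) w) = \sum_(i < K) c i * fine (P (A i)).
Proof.
move=> HF K c A HA; rewrite EE_sum; last first.
  by move=> i; apply: bmeasM; [exact: bmeas_cst | apply: bmeas_indic; apply: HF].
apply: eq_bigr => i _; rewrite EEZ; last by apply: bmeas_indic; apply: HF.
by rewrite EE_indic //; apply: HF.
Qed.

Variables F1 F2 : set (set T).
Hypothesis HF1 : forall A, F1 A -> measurable A.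
Hypothesis HF2 : forall A, F2 A -> measurable A.
Hypothesis Hind : forall A B, F1 A -> F2 B -> P (A `&` B) = (P A * P B)%E.

Lemma sfun_indep f g : sfun F1 f -> sfun F2 g ->
  EE P (fun w => f w * g w) = EE P f * EE P g.
Proof.
move=> [K [c [A [HA Hf]]]] [L [e [B [HB Hg]]]].
have -> : (fun w => f w * g w) = fun w => \sum_(i < K) \sum_(j < L)
     (c i * e j) * \1_(A i `&` B j) w.
  apply: funext => w; rewrite Hf Hg big_distrl /=; apply: eq_bigr => i _.
  rewrite big_distrr /=; apply: eq_bigr => j _.
  by rewrite indicI /= mulrACA.
have -> : f = fun w => \sum_(i < K) c i * \1_(A i) w by apply: funext.
have -> : g = fun w => \sum_(i < L) e i * \1_(B i) w by apply: funext.
rewrite (EE_sfun _ HF1 _ _ _ HA) (EE_sfun _ HF2 _ _ _ HB) EE_sum; last first.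
  move=> i; apply: bmeas_sum => j; apply: bmeasM; first exact: bmeas_cst.
  by apply: bmeas_indic; apply: measurableI; [apply: HF1|apply: HF2].
rewrite big_distrl /=; apply: eq_bigr => i _.
rewrite (EE_sfun measurable) //; last first.
  by move=> j; apply: measurableI; [apply: HF1|apply: HF2].
rewrite big_distrr /=; apply: eq_bigr => j _.
rewrite Hind // fineM //; first by rewrite mulrACA.
  exact/P_fin/HF1.
exact/P_fin/HF2.
Qed.

Lemma approx {F : set (set T)} {h M n} : Fmeas F h -> 0 <= M ->
  (forall w, `|h w| <= M) -> (0 < n)%N ->
  exists h', sfun F h' /\ forall w, `|h w - h' w| <= n%:R^-1.
Proof.
move=> Fh M0 HM n0.
have n0' : 0 < n%:R :> R by rewrite ltr0n.
pose m := Num.truncn (2 * M * n%:R).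
pose c (k : 'I_m.+1) : R := k%:R / n%:R - M.
pose A (k : 'I_m.+1) := h @^-1` `[c k, c k + n%:R^-1[.
exists (fun w => \sum_(k < m.+1) c k * \1_(A k) w); split.
  by exists m.+1, c, A; split => // k; apply: Fh; exact: measurable_itv.
move=> w.
pose x := (h w + M) * n%:R.
have hwM : - M <= h w <= M by rewrite -ler_norml.
have x0 : 0 <= x.
  by rewrite /x; apply: mulr_ge0; [lra | exact: ltW].
have tm : (Num.truncn x < m.+1)%N.
  rewrite ltnS truncn_le_nat; apply: le_lt_trans (truncnS_gt _).
  rewrite /x; apply: ler_wpM2r; [exact: ltW | lra].
pose t := Ordinal tm.
have memA k : (w \in A k) = (c k <= h w < c k + n%:R^-1).
  by rewrite /A; apply/idP/idP; rewrite in_setE /= in_itv /= //.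
have inA k : (w \in A k) = (k == t).
  rewrite memA -val_eqE /= eq_sym truncn_eq //.
  have -> : (c k <= h w) = (k%:R <= x).
    by rewrite /c lerBlDr ler_pdivrMr.
  have -> : c k + n%:R^-1 = k.+1%:R / n%:R - M.
    by rewrite /c -natr1 mulrDl mul1r; ring.
  by rewrite ltrBrDr ltr_pdivlMr.
rewrite (bigD1 t) //= big1; last first.
  move=> k /negbTE kt; rewrite /indic.
  have : (w \in A k) = false by rewrite inA.
  by move=> ->; rewrite mulr0.
rewrite addr0 /indic.
have : (w \in A t) = true by rewrite inA eqxx.
move=> -> ; rewrite mulr1.
have : w \in A t by rewrite inA eqxx.
rewrite memA => /andP[H1 H2].
rewrite ger0_norm; last by lra.
lra.
Qed.



Lemma zero_of_small (D C : R) : (forall n, (0 < n)%N -> `|D| <= C / n%:R) -> D = 0.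
Proof.
move=> H; apply/eqP; rewrite -normr_eq0; case: (eqVneq `|D| 0) => // Dn0.
have D0 : 0 < `|D| by rewrite lt0r Dn0 normr_ge0.
pose n := (Num.truncn (C / `|D|)).+1.
have n0 : 0 < n%:R :> R by rewrite ltr0n.
have := H n isT; rewrite ler_pdivlMr // => H1.
have := truncnS_gt (C / `|D|); rewrite ltr_pdivrMr // => H2.
rewrite -/n in H2; lra.
Qed.

Lemma indep_EE (f g : T -> R) (M1 M2 : R) : Fmeas F1 f -> Fmeas F2 g -> 0 <= M1 -> 0 <= M2 ->
  (forall w, `|f w| <= M1) -> (forall w, `|g w| <= M2) ->
  EE P (fun w => f w * g w) = EE P f * EE P g.
Proof.
move=> Ff Fg M10 M20 Hf Hg.
have bf : bmeas f by split; [exact: Fmeas_meas HF1 Ff | exists M1].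
have bg : bmeas g by split; [exact: Fmeas_meas HF2 Fg | exists M2].
apply/eqP; rewrite -subr_eq0; apply/eqP.
apply: (@zero_of_small _ (2 * (M1 + M2 + 1))) => n n0.
have [f' [sf' Hf']] := approx (F := F1) Ff M10 Hf n0.
have [g' [sg' Hg']] := approx (F := F2) Fg M20 Hg n0.
have bf' := sfun_bmeas _ _ HF1 sf'.
have bg' := sfun_bmeas _ _ HF2 sg'.
set e := n%:R^-1 : R.
have e0 : 0 < e by rewrite invr_gt0 ltr0n.
have e1 : e <= 1 by rewrite invf_le1 ?ler1n ?ltr0n.
have Hf1 w : `|f' w| <= M1 + 1.
  have -> : f' w = f w - (f w - f' w) by ring.
  apply: le_trans (ler_normB _ _) _; apply: lerD => //; exact: le_trans (Hf' w) e1.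
have Hg1 w : `|g' w| <= M2 + 1.
  have -> : g' w = g w - (g w - g' w) by ring.
  apply: le_trans (ler_normB _ _) _; apply: lerD => //; exact: le_trans (Hg' w) e1.
have E1 : `|EE P (fun w => f w * g w) - EE P (fun w => f' w * g' w)| <= e * (M1 + M2 + 1).
  rewrite -EEB; [|exact: bmeasM|exact: bmeasM].
  apply: EE_bound; first by apply: bmeasB; exact: bmeasM.
  move=> w.
  have -> : f w * g w - f' w * g' w = (f w - f' w) * g w + f' w * (g w - g' w) by ring.
  apply: le_trans (ler_normD _ _) _; rewrite !normrM.
  have : `|f w - f' w| * `|g w| <= e * M2 by apply: ler_pM.
  have : `|f' w| * `|g w - g' w| <= (M1 + 1) * e by apply: ler_pM.
  move=> h1 h2; lra.
rewrite (@sfun_indep f' g' sf' sg') in E1.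
have Ef : `|EE P f - EE P f'| <= e.
  by rewrite -EEB //; apply: EE_bound => //; exact: bmeasB.
have Eg : `|EE P g - EE P g'| <= e.
  by rewrite -EEB //; apply: EE_bound => //; exact: bmeasB.
have Eg2 : `|EE P g| <= M2 by exact: EE_bound.
have Ef1 : `|EE P f'| <= M1 + 1 by exact: EE_bound.
have -> : EE P (fun w => f w * g w) - EE P f * EE P g =
   (EE P (fun w => f w * g w) - EE P f' * EE P g') -
   ((EE P f - EE P f') * EE P g + EE P f' * (EE P g - EE P g')) by ring.
apply: le_trans (ler_normB _ _) _.
have h3 := ler_normD ((EE P f - EE P f') * EE P g) (EE P f' * (EE P g - EE P g')).
rewrite !normrM in h3.
have : `|EE P f - EE P f'| * `|EE P g| <= e * M2 by apply: ler_pM.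
have : `|EE P f'| * `|EE P g - EE P g'| <= (M1 + 1) * e by apply: ler_pM.
move=> h1 h2.
lra.
Qed.

End indep.

Section join.
Context {d : measure_display} {T : measurableType d} {R : realType} (P : probability T R).
Context (S : finType) (Fam : S -> set (set T)).
Hypothesis Fam_sig : forall x, sigma_algebra setT (Fam x).
Hypothesis Fam_meas : forall x A, Fam x A -> measurable A.
Hypothesis Fam_ind : forall E : S -> set T, (forall x, Fam x (E x)) ->
    P (\bigcap_(x in [set: S]) E x) = (\prod_(x : S) P (E x))%E.
Variable s : S.

Lemma FamT x : Fam x setT.
Proof.
have [h0 hC _] := Fam_sig x.
by have := hC _ h0; rewrite setD0.
Qed.

Lemma FamI x A B : Fam x A -> Fam x B -> Fam x (A `&` B).
Proof.
move=> hA hB.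
have := (sigma_algebraP (U := setT) (C := Fam x) (fun _ _ _ _ => I)).1 (Fam_sig x).
by case=> _ _ _ hI; apply: hI.
Qed.

Definition PiS := [set X | exists E : S -> set T, (forall x, Fam x (E x)) /\
   E s = setT /\ X = \bigcap_(x in [set: S]) E x].

Definition DS := [set B | measurable B /\
   forall C, Fam s C -> P (C `&` B) = (P C * P B)%E].

Lemma PiS_I : setI_closed PiS.
Proof.
move=> X Y [E [HE [Es ->]]] [E' [HE' [Es' ->]]].
exists (fun x => E x `&` E' x); split; first by move=> x; apply: FamI.
split; first by rewrite Es Es' setIT.
by apply/seteqP; split => w /=; [move=> [h1 h2] x _; split; [exact: h1|exact: h2]
  | move=> h; split => x _; have [] := h x I].
Qed.

Lemma PiS_D : PiS `<=` DS.
Proof.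
move=> X [E [HE [Es ->]]]; split.
  apply: fin_bigcap_measurable; first exact: finite_finset.
  move=> x _; exact: Fam_meas (HE x).
move=> C HC.
pose E' := fun x => if x == s then C else E x.
have HE' x : Fam x (E' x) by rewrite /E'; case: eqP => [->|]//.
have -> : C `&` \bigcap_(x in [set: S]) E x = \bigcap_(x in [set: S]) E' x.
  apply/seteqP; split => w /=.
    move=> [hC hE] x _; rewrite /E'; case: eqP => // _; exact: hE.
  move=> h; split; first by have := h s I; rewrite /E' eqxx.
  move=> x _; have := h x I; rewrite /E'; case: eqP => // ->.
  by rewrite Es.
rewrite !Fam_ind //.
rewrite (bigD1 s) //= [in RHS](bigD1 s) //= Es probability_setT mul1e /E' eqxx.
congr (_ * _)%E; apply: eq_bigr => x /negbTE ->; done.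
Qed.


Lemma DS_lambda : lambda_system setT DS.
Proof.
split.
- by [].
- split => // C HC; by rewrite setIT probability_setT mule1.
- move=> A B BA [mA HA] [mB HB]; split; first exact: measurableD.
  move=> C HC.
  have mC := Fam_meas _ _ HC.
  have sub1 : C `&` B `<=` C `&` A by move=> w [? ?]; split => //; exact: BA.
  have fA : (P A < +oo)%E by apply: le_lt_trans (probability_le1 P mA) _; rewrite ltry.
  have fCA : (P (C `&` A) < +oo)%E.
    by apply: le_lt_trans (probability_le1 P (measurableI _ _ mC mA)) _; rewrite ltry.
  have eAB : P (A `\` B) = (P A - P B)%E.
    by rewrite measureD // (setIidr BA).
  have eC : P (C `&` (A `\` B)) = (P (C `&` A) - P (C `&` B))%E.
    have -> : C `&` (A `\` B) = (C `&` A) `\` (C `&` B).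
      apply/seteqP; split => w /=.
        by move=> [h1 [h2 h3]]; split => // -[].
      by move=> [[h1 h2] h3]; split => //; split => // h4; apply: h3.
    rewrite measureD //; [|exact: measurableI|exact: measurableI].
    by rewrite (setIidr sub1).
  rewrite eC eAB (HA C HC) (HB C HC).
  rewrite -(fineK (P_fin P _ mA)) -(fineK (P_fin P _ mB)) -(fineK (P_fin P _ mC)).
  by rewrite muleBr.

- move=> F ndF HF; split.
    by apply: bigcupT_measurable => i; have [] := HF i.
  move=> C HC.
  have mC := Fam_meas _ _ HC.
  have mF i : measurable (F i) by have [] := HF i.
  have h1 : (P \o (fun i => C `&` F i)) x @[x --> \oo] --> P (C `&` \bigcup_i F i).
    rewrite setI_bigcupr; apply: nondecreasing_cvg_mu.
    - by move=> i; apply: measurableI.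
    - by apply: bigcupT_measurable => i; apply: measurableI.
    - move=> i j ij; apply/subsetPset; apply: setIS; apply/subsetPset; exact: ndF.
  have h2 : (P \o F) x @[x --> \oo] --> P (\bigcup_i F i).
    apply: nondecreasing_cvg_mu => //.
    by apply: bigcupT_measurable.
  have h3 : (fun i => (P C * (P \o F) i)%E) x @[x --> \oo] --> (P C * P (\bigcup_i F i))%E.
    apply: cvgeM; last exact: h2; last exact: cvg_cst.
    apply: mule_def_fin; first exact: P_fin.
    by apply: P_fin; apply: bigcupT_measurable.
  have e : (P \o (fun i => C `&` F i)) = (fun i => (P C * (P \o F) i)%E).
    by apply: funext => i /=; have [_ ->] := HF i.
  rewrite e in h1.
  exact: (cvg_unique _ h1 h3).
Qed.

Lemma join_indep A B : Fam s A ->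
  <<s [set E | exists x, x != s /\ Fam x E] >> B -> P (A `&` B) = (P A * P B)%E.
Proof.
move=> HA HB.
have sub : [set E | exists x, x != s /\ Fam x E] `<=` PiS.
  move=> E [x [xs HE]].
  exists (fun y => if y == x then E else setT); split.
    by move=> y; case: eqP => [->|_] //; exact: FamT.
  split; first by rewrite eq_sym (negbTE xs).
  apply/seteqP; split => w /=.
    by move=> hE y _; case: eqP.
  by move=> h; have := h x I; rewrite eqxx.
have := lambda_system_subset PiS_I DS_lambda PiS_D (fun _ _ => subsetT _).
move=> /(_ B (sub_sigma_algebra2 sub HB)) [_ ]; exact.
Qed.

End join.

Section valuefun.
Context {R : realType} {S A : finType} (pi : S -> A -> R) (r : S -> A -> R) (gamma : R).
Hypothesis hpi : is_policy pi.
Hypothesis hg : 0 <= gamma < 1.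

Definition Mr := \sum_(x : S) \sum_(a : A) `|r x a|.

Lemma pi_le1 x a : pi x a <= 1.
Proof.
have [h0 h1] := hpi; rewrite -(h1 x) (bigD1 a) //= lerDl.
by apply: sumr_ge0 => b _; exact: h0.
Qed.

Lemma Mr_ge0 : 0 <= Mr.
Proof. by apply: sumr_ge0 => x _; apply: sumr_ge0 => a _. Qed.

Lemma rew_bound x : `|rew_pi pi r x| <= Mr.
Proof.
have [h0 h1] := hpi.
rewrite /rew_pi; apply: le_trans (ler_norm_sum _ _ _) _.
apply: le_trans (_ : \sum_(a : A) `|r x a| <= _); last first.
  rewrite /Mr (bigD1 x) //= lerDl.
  by apply: sumr_ge0 => y _; apply: sumr_ge0 => a _.
apply: ler_sum => a _; rewrite normrM ger0_norm //.
by apply: ler_piMl => //; exact: pi_le1.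
Qed.

Lemma step_bound q (tq : is_transition q) (f : S -> R) M :
  (forall x, `|f x| <= M) -> forall x, `|step_pi pi q f x| <= M.
Proof.
move=> Hf x; have [h0 h1] := hpi; have [q0 q1] := tq.
rewrite /step_pi; apply: le_trans (ler_norm_sum _ _ _) _.
apply: le_trans (_ : \sum_(a : A) pi x a * M <= _); last by rewrite -mulr_suml h1 mul1r.
apply: ler_sum => a _; rewrite normrM ger0_norm //; apply: ler_wpM2l => //.
apply: le_trans (ler_norm_sum _ _ _) _.
apply: le_trans (_ : \sum_(y : S) q x a y * M <= _); last by rewrite -mulr_suml q1 mul1r.
apply: ler_sum => y _; rewrite normrM ger0_norm //; exact: ler_wpM2l.
Qed.

Lemma iter_bound q (tq : is_transition q) h x :
  `|iter h (step_pi pi q) (rew_pi pi r) x| <= Mr.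
Proof.
elim: h x => [|h IH] x /=; first exact: rew_bound.
exact: step_bound.
Qed.

Lemma geom_sum n : (\sum_(h < n) gamma ^+ h) * (1 - gamma) = 1 - gamma ^+ n.
Proof.
elim: n => [|n IH]; first by rewrite big_ord0 mul0r expr0 subrr.
rewrite big_ord_recr /= mulrDl IH exprS; ring.
Qed.

Lemma geom_le n : \sum_(h < n) gamma ^+ h <= (1 - gamma)^-1.
Proof.
have g1 : 0 < 1 - gamma by case/andP: hg => _ ?; rewrite subr_gt0.
rewrite -[(1 - gamma)^-1]mul1r ler_pdivlMr // geom_sum gerBl; apply: exprn_ge0.
by case/andP: hg.
Qed.

Definition psum q y n := \sum_(h < n) gamma ^+ h * iter h (step_pi pi q) (rew_pi pi r) y.

Lemma psum_bound q (tq : is_transition q) y n : `|psum q y n| <= Mr / (1 - gamma).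
Proof.
have g0 : 0 <= gamma by case/andP: hg.
rewrite /psum; apply: le_trans (ler_norm_sum _ _ _) _.
apply: le_trans (_ : \sum_(h < n) gamma ^+ h * Mr <= _).
  apply: ler_sum => h _; rewrite normrM ger0_norm ?exprn_ge0 //.
  by apply: ler_wpM2l; [exact: exprn_ge0 | exact: iter_bound].
rewrite -mulr_suml mulrC; apply: ler_wpM2l; first exact: Mr_ge0.
exact: geom_le.
Qed.

Lemma psum_cvg q (tq : is_transition q) y : cvgn (psum q y).
Proof.
pose u h := gamma ^+ h * iter h (step_pi pi q) (rew_pi pi r) y.
have -> : psum q y = series u.
  by apply: funext => n; rewrite /psum /series /= big_mkord.
apply: normed_cvg; apply: nondecreasing_is_cvgn.
  move=> m n mn; rewrite /series /=.
  rewrite !seriesEord /=.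
  rewrite -!(big_mkord xpredT (fun i => `|u i|)).
  rewrite (big_cat_nat (leq0n m) mn) /= lerDl.
  by apply: sumr_ge0 => i _.
exists (Mr / (1 - gamma)) => _ [n _ <-].
rewrite /normed_series_of seriesEord /=.
have g0 : 0 <= gamma by case/andP: hg.
apply: le_trans (_ : \sum_(h < n) gamma ^+ h * Mr <= _).
  apply: ler_sum => h _; rewrite /u normrM ger0_norm ?exprn_ge0 //.
  by apply: ler_wpM2l; [exact: exprn_ge0 | exact: iter_bound].
rewrite -mulr_suml mulrC; apply: ler_wpM2l; first exact: Mr_ge0.
exact: geom_le.
Qed.

Lemma value_bound q (tq : is_transition q) y :
  `|value pi r gamma q y| <= Mr / (1 - gamma).
Proof.
have hc := psum_cvg _ tq y.
rewrite /value -/(psum q y) ler_norml; apply/andP; split.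
  apply: limr_ge => //; near=> n.
  by have := psum_bound _ tq y n; rewrite ler_norml => /andP[].
apply: limr_le => //; near=> n.
by have := psum_bound _ tq y n; rewrite ler_norml => /andP[].
Unshelve. all: by end_near.
Qed.

End valuefun.

Section valuemeas.
Context {R : realType} {S A : finType} (pi : S -> A -> R) (r : S -> A -> R) (gamma : R).
Hypothesis hpi : is_policy pi.
Hypothesis hg : 0 <= gamma < 1.
Context {d' : measure_display} (U : measurableType d') (q : U -> S -> A -> S -> R).
Context (Good : S -> Prop).
Hypothesis tq : forall w, is_transition (q w).
Hypothesis Gstep : forall y a z, Good y -> (exists w, 0 < q w y a z) -> Good z.
Hypothesis Gmeas : forall y a z, Good y -> (exists w, 0 < q w y a z) ->
  measurable_fun setT (fun w => q w y a z).

Lemma meas_sum I (s : seq I) (f : I -> U -> R) :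
  (forall i, measurable_fun setT (f i)) ->
  measurable_fun setT (fun w => \sum_(i <- s) f i w).
Proof.
move=> H; elim: s => [|i s IH].
  by under eq_fun do rewrite big_nil; exact: measurable_cst.
under eq_fun do rewrite big_cons; exact: measurable_realfun.measurable_funD.
Qed.

Lemma iter_meas h y : Good y ->
  measurable_fun setT (fun w => iter h (step_pi pi (q w)) (rew_pi pi r) y).
Proof.
elim: h y => [|h IH] y Gy /=; first exact: measurable_cst.
rewrite /step_pi; apply: meas_sum => a.
apply: measurable_realfun.measurable_funM; first exact: measurable_cst.
apply: meas_sum => z.
case: (pselect (exists w, 0 < q w y a z)) => [ex|nex].
  apply: measurable_realfun.measurable_funM; first exact: Gmeas.
  by apply: IH; exact: Gstep ex.
have -> : (fun w => q w y a z * iter h (step_pi pi (q w)) (rew_pi pi r) z) = fun=> 0.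
  apply: funext => w; have [q0 _] := tq w.
  have : q w y a z = 0.
    apply/eqP; rewrite eq_le q0 andbT leNgt; apply/negP => hp.
    by apply: nex; exists w.
  by move=> ->; rewrite mul0r.
exact: measurable_cst.
Qed.

Lemma value_meas y : Good y ->
  measurable_fun setT (fun w => value pi r gamma (q w) y).
Proof.
move=> Gy.
apply: (@measurable_realfun.measurable_fun_cvg _ _ _ _
   (fun n w => psum pi r gamma (q w) y n)).
  move=> n; rewrite /psum; apply: meas_sum => h.
  apply: measurable_realfun.measurable_funM; first exact: measurable_cst.
  exact: iter_meas.
move=> w _; have H := psum_cvg pi r gamma hpi hg _ (tq w) y; exact: H.
Qed.

End valuemeas.

Section main.
Context {R : realType} {S A : finType} {d : measure_display} {T : measurableType d}.
Variables (P : probability T R) (r : S -> A -> R) (gamma : R) (p : T -> S -> A -> S -> R).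
Hypothesis hg : 0 <= gamma < 1.
Hypothesis tp : forall w, is_transition (p w).
Hypothesis mp : forall x a y, measurable_fun setT (fun w => p w x a y).
Hypothesis hind : indep_transitions P p.
Hypothesis hac : acyclic_mdp p.
Variables (s : S) (pi : S -> A -> R).
Hypothesis hpi : is_policy pi.

Lemma gens_meas x E : (exists (a : A) (y : S) (B : set R),
   measurable B /\ E = (fun w => p w x a y) @^-1` B) -> measurable E.
Proof.
move=> [a [y [B [mB ->]]]]; have := mp x a y measurableT B mB; by rewrite setTI.
Qed.

Lemma strans_meas x E : sigma_trans p x E -> measurable E.
Proof.
apply: smallest_sub; first exact: sigma_algebra_measurable.
by move=> F; apply: gens_meas.
Qed.

Definition G2 := [set E | exists x, x != s /\ sigma_trans p x E].

Lemma F2_meas E : <<s G2 >> E -> measurable E.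
Proof.
apply: smallest_sub; first exact: sigma_algebra_measurable.
by move=> F [x [_ h]]; exact: strans_meas h.
Qed.

Lemma indepF E B : sigma_trans p s E -> <<s G2 >> B -> P (E `&` B) = (P E * P B)%E.
Proof.
move=> hE hB.
exact: (@join_indep d T R P S (sigma_trans p) (fun x => smallest_sigma_algebra _ _)
  strans_meas hind s E B hE hB).
Qed.

Lemma Fmeas_p a y : Fmeas (sigma_trans p s) (fun w => p w s a y).
Proof.
move=> B mB; apply: sub_sigma_algebra; by exists a, y, B.
Qed.

Definition Tg := g_sigma_algebraType G2.

Lemma Tg_Fmeas (g : T -> R) : measurable_fun (setT : set Tg) g -> Fmeas (<<s G2 >>) g.
Proof. by move=> mg B mB; have := mg measurableT B mB; rewrite setTI. Qed.

Lemma p_meas_Tg y a z : y != s -> measurable_fun (setT : set Tg) (fun w => p w y a z).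
Proof.
move=> ys _ B mB; rewrite setTI; apply: sub_sigma_algebra; exists y; split => //.
by apply: sub_sigma_algebra; exists a, z, B.
Qed.

Lemma zero_other w y a z : p w y a y = 1 -> z != y -> p w y a z = 0.
Proof.
move=> h1 zy; have [q0 q1] := tp w.
have H0 : \sum_(i | i != y) p w y a i = 0.
  by have := q1 y a; rewrite (bigD1 y) //= h1; lra.
have nn : forall i, i != y -> 0 <= p w y a i by move=> i _; exact: q0.
exact: (psumr_eq0P nn H0 zy).
Qed.

Lemma Vmeas_far y : ~~ connect (mdp_edge p) y s ->
  Fmeas (<<s G2 >>) (fun w => value pi r gamma (p w) y).
Proof.
move=> Gy; apply: Tg_Fmeas.
apply: (@value_meas R S A pi r gamma hpi hg _ Tg p (fun y => ~~ connect (mdp_edge p) y s)) => //.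
- move=> y' a z Gy' [w hw]; case: (eqVneq z y') => [->//|zy].
  have eyz : mdp_edge p y' z.
    by apply/asboolP; split; [rewrite eq_sym | exists w, a].
  apply/negP => czs; move/negP: Gy'; apply.
  exact: connect_trans (connect1 eyz) czs.
- move=> y' a z Gy' _; apply: p_meas_Tg.
  by apply/negP => /eqP ys; move: Gy'; rewrite ys connect0.
Qed.

Lemma Vmeas_abs : (forall w a, p w s a s = 1) ->
  Fmeas (<<s G2 >>) (fun w => value pi r gamma (p w) s).
Proof.
move=> habs; apply: Tg_Fmeas.
have Gstep : forall y a z, y = s -> (exists w : Tg, 0 < p w y a z) -> z = s.
  move=> y a z -> [w hw]; case: (eqVneq z s) => // zs.
  by move: hw; rewrite (zero_other _ _ _ _ (habs w a) zs) ltxx.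
apply: (@value_meas R S A pi r gamma hpi hg _ Tg p (fun y => y = s)) => //.
move=> y a z Gy ex; have zs := Gstep _ _ _ Gy ex; rewrite Gy zs.
have -> : (fun w : Tg => p w s a s) = fun=> 1 by apply: funext => w; exact: habs.
exact: measurable_cst.
Qed.


Lemma p_le1 w x a y : `|p w x a y| <= 1.
Proof.
have [q0 q1] := tp w; rewrite ger0_norm // -(q1 x a) (bigD1 y) //= lerDl.
by apply: sumr_ge0 => i _; exact: q0.
Qed.

Let MV := Mr r / (1 - gamma).

Lemma MV0 : 0 <= MV.
Proof.
apply: divr_ge0; first exact: Mr_ge0.
by case/andP: hg => _ h; rewrite subr_ge0 ltW.
Qed.

Lemma V_bound y w : `|value pi r gamma (p w) y| <= MV.
Proof. exact: (value_bound pi r gamma hpi hg _ (tp w) y). Qed.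

Lemma term_EE a y :
  bmeas (fun w => pi s a * p w s a y * value pi r gamma (p w) y) /\
  EE P (fun w => pi s a * p w s a y * value pi r gamma (p w) y) =
     pi s a * EE P (fun w => p w s a y) * EE P (fun w => value pi r gamma (p w) y).
Proof.
case: (pselect (exists w, 0 < p w s a y)) => [[w0 hw0]|nex].
  have FV : Fmeas (<<s G2 >>) (fun w => value pi r gamma (p w) y).
    case: (eqVneq y s) => [ys|ys].
      move: hw0; rewrite ys => hw0; apply: Vmeas_abs.
      by move=> w a'; exact: (hac.2 w0 s a hw0 w a').
    apply: Vmeas_far.
    have e : mdp_edge p s y by apply/asboolP; split; [rewrite eq_sym | exists w0, a].
    exact: hac.1 _ _ e.
  have Fp := Fmeas_p a y.
  have key := @indep_EE _ _ _ P (sigma_trans p s) (<<s G2 >>) (strans_meas s) F2_meas indepF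
     _ _ 1 MV Fp FV ler01 MV0 (fun w => p_le1 w s a y) (V_bound y).
  have bf : bmeas (fun w => p w s a y).
    split; [exact: Fmeas_meas (strans_meas s) Fp | exists 1 => w; exact: p_le1].
  have bg : bmeas (fun w => value pi r gamma (p w) y).
    split; [exact: Fmeas_meas F2_meas FV | exists MV => w; exact: V_bound].
  have -> : (fun w => pi s a * p w s a y * value pi r gamma (p w) y) =
     (fun w => pi s a * (p w s a y * value pi r gamma (p w) y)).
    by apply: funext => w; rewrite mulrA.
  split; first by apply: bmeasM; [exact: bmeas_cst | exact: bmeasM].
  by rewrite EEZ ?key ?mulrA //; exact: bmeasM.
have z w : p w s a y = 0.
  have [q0 _] := tp w; apply/eqP; rewrite eq_le q0 andbT leNgt; apply/negP => hp.
  by apply: nex; exists w.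
have -> : (fun w => pi s a * p w s a y * value pi r gamma (p w) y) = fun=> 0.
  by apply: funext => w; rewrite z mulr0 mul0r.
have -> : (fun w => p w s a y) = fun=> 0 by apply: funext => w; rewrite z.
by split; [exact: bmeas_cst | rewrite !EE_cst mulr0 mul0r].
Qed.

End main.

Theorem lemma6 (R : realType) (S A : finType) (d : measure_display)
  (T : measurableType d) (P : probability T R)
  (r : S -> A -> R) (gamma : R) (p : T -> S -> A -> S -> R) :
  0 <= gamma < 1 ->
  (forall w, is_transition (p w)) ->
  (forall x a y, measurable_fun setT (fun w => p w x a y)) ->
  indep_transitions P p ->
  acyclic_mdp p ->
  forall (s : S) (pi : S -> A -> R), is_policy pi ->
  forall Z : T -> R,
    is_cond_exp P (sigma_trans p s)
      (fun w => \sum_(a : A) \sum_(y : S) pi s a * p w s a y * value pi r gamma (p w) y)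
      Z ->
  (fine ('E_P[Z])%E) ^+ 2 =
    \sum_(a : A) \sum_(y : S) pi s a * pbar P p s a y * (Vbar P p pi r gamma y) ^+ 2
    - var_pi pi (pbar P p) s (Vbar P p pi r gamma).
Proof.
move=> hg tp mp hind hac s pi hpi Z [_ [_ hZ]].
have hT : sigma_trans p s setT.
  have [_ hC _] := smallest_sigma_algebra setT
    [set E | exists (a : A) (y : S) (B : set R),
          measurable B /\ E = (fun w => p w s a y) @^-1` B].
  by have := hC _ (@sigma_algebra0 _ setT _); rewrite setD0.
have eZ := hZ setT hT.
have hpb a y : EE P (fun w => p w s a y) = pbar P p s a y by rewrite /pbar unlock.
have hvb y : EE P (fun w => value pi r gamma (p w) y) = Vbar P p pi r gamma y
  by rewrite /Vbar unlock.
have tE a y := term_EE P r gamma p hg tp mp hind hac s pi hpi a y.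
have -> : fine ('E_P[Z])%E = \sum_(a : A) \sum_(y : S) pi s a * pbar P p s a y * Vbar P p pi r gamma y.
  rewrite unlock.
  rewrite eZ.
  have -> : fine (\int[P]_(w in setT) ((\sum_(a : A) \sum_(y : S) pi s a * p w s a y * value pi r gamma (p w) y))%:E)%E
    = EE P (fun w => \sum_(a : A) \sum_(y : S) pi s a * p w s a y * value pi r gamma (p w) y) by [].
  rewrite EE_sum; last by move=> a; apply: bmeas_sum => y; exact: (tE a y).1.
  apply: eq_bigr => a _; rewrite EE_sum; last by move=> y; exact: (tE a y).1.
  by apply: eq_bigr => y _; rewrite (tE a y).2 hpb hvb.
set m := \sum_(a : A) \sum_(y : S) pi s a * pbar P p s a y * Vbar P p pi r gamma y.
have W1 : \sum_(a : A) \sum_(y : S) pi s a * pbar P p s a y = 1.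
  have [_ h1] := hpi; rewrite -(h1 s); apply: eq_bigr => a _.
  rewrite -mulr_sumr -[RHS]mulr1; congr (_ * _).
  have bp y : bmeas (fun w => p w s a y).
    split; first exact: mp.
    by exists 1 => w; exact: (p_le1 _ tp).
  rewrite -(eq_bigr _ (fun y _ => hpb a y)) -EE_sum //.
  have -> : (fun w => \sum_(y : S) p w s a y) = fun=> 1.
    by apply: funext => w; have [_ ->] := tp w.
  exact: EE_cst.
rewrite /var_pi /= -/m.
set f := Vbar P p pi r gamma.
set q := pbar P p.
have E : \sum_(a : A) \sum_(y : S) pi s a * q s a y * (f y - m) ^+ 2 =
   \sum_(a : A) \sum_(y : S) pi s a * q s a y * f y ^+ 2
   - 2 * m * (\sum_(a : A) \sum_(y : S) pi s a * q s a y * f y)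
   + m ^+ 2 * (\sum_(a : A) \sum_(y : S) pi s a * q s a y).
  transitivity (\sum_(a : A) \sum_(y : S) (pi s a * q s a y * f y ^+ 2
      - 2 * m * (pi s a * q s a y * f y) + m ^+ 2 * (pi s a * q s a y))).
    by apply: eq_bigr => a _; apply: eq_bigr => y _; ring.
  under eq_bigr => a _ do rewrite big_split /= sumrB -!mulr_sumr.
  rewrite big_split /= sumrB -!mulr_sumr; congr (_ + (_ * _)).
  by apply: eq_bigr => a _; rewrite mulr_sumr.
rewrite E -/m W1; ring.
Qed.
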